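(* Let $\mathfrak k$ be a nonzero semisimple Hilbert–Lie algebra and $\phi$ an automorphism of $\mathfrak k$ of finite order. Then the fixed point algebra $\mathfrak k^\phi=\{x\in\mathfrak k:\phi(x)=x\}$ is nonzero.
   Context: A Hilbert–Lie algebra is a real Lie algebra with Hilbert space structure such that $\langle[x,y],z\rangle=\langle x,[y,z]\rangle$; it is semisimple if its center is trivial (equivalently it is an orthogonal sum of simple ideals). Automorphisms are isometric Lie algebra automorphisms. *)

(* Defs.v *)
From Stdlib Require Import Reals Lra.
Open Scope R_scope.

Record HilbertSpace := {
  hcar :> Type;
  hzero : hcar;
  hadd : hcar -> hcar -> hcar;
  hopp : hcar -> hcar;
  hscal : R -> hcar -> hcar;
  hinner : hcar -> hcar -> R;
  hadd_assoc : forall x y z, hadd x (hadd y z) = hadd (hadd x y) z;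
  hadd_comm : forall x y, hadd x y = hadd y x;
  hadd_0 : forall x, hadd hzero x = x;
  hadd_opp : forall x, hadd x (hopp x) = hzero;
  hscal_1 : forall x, hscal 1 x = x;
  hscal_assoc : forall a b x, hscal a (hscal b x) = hscal (a * b) x;
  hscal_addv : forall a x y, hscal a (hadd x y) = hadd (hscal a x) (hscal a y);
  hscal_adds : forall a b x, hscal (a + b) x = hadd (hscal a x) (hscal b x);
  hinner_sym : forall x y, hinner x y = hinner y x;
  hinner_addl : forall x y z, hinner (hadd x y) z = hinner x z + hinner y z;
  hinner_scall : forall a x y, hinner (hscal a x) y = a * hinner x y;
  hinner_pos : forall x, 0 <= hinner x x;
  hinner_def : forall x, hinner x x = 0 -> x = hzero;
  hcomplete : forall u : nat -> hcar,
    (forall eps, eps > 0 -> exists N, forall m n, (m >= N)%nat -> (n >= N)%nat ->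
        sqrt (hinner (hadd (u m) (hopp (u n))) (hadd (u m) (hopp (u n)))) < eps) ->
    exists l, forall eps, eps > 0 -> exists N, forall n, (n >= N)%nat ->
        sqrt (hinner (hadd (u n) (hopp l)) (hadd (u n) (hopp l))) < eps
}.

Arguments hzero {_}.
Arguments hadd {_} _ _.
Arguments hopp {_} _.
Arguments hscal {_} _ _.
Arguments hinner {_} _ _.

Record HilbertLie := {
  hl_space :> HilbertSpace;
  hl_br : hl_space -> hl_space -> hl_space;
  hl_br_addl : forall x y z, hl_br (hadd x y) z = hadd (hl_br x z) (hl_br y z);
  hl_br_scall : forall a x y, hl_br (hscal a x) y = hscal a (hl_br x y);
  hl_br_alt : forall x, hl_br x x = hzero;
  hl_jacobi : forall x y z,
    hadd (hl_br x (hl_br y z)) (hadd (hl_br y (hl_br z x)) (hl_br z (hl_br x y)))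
    = hzero;
  hl_invariant : forall x y z, hinner (hl_br x y) z = hinner x (hl_br y z)
}.

Arguments hl_br {_} _ _.

Definition hl_semisimple (k : HilbertLie) : Prop :=
  forall z : k, (forall x : k, hl_br z x = hzero) -> z = hzero.

Definition hl_nonzero (k : HilbertLie) : Prop := exists x : k, x <> hzero.

Definition hl_automorphism (k : HilbertLie) (phi : k -> k) : Prop :=
  (forall x y, phi (hadd x y) = hadd (phi x) (phi y)) /\
  (forall a x, phi (hscal a x) = hscal a (phi x)) /\
  (forall x y, phi (hl_br x y) = hl_br (phi x) (phi y)) /\
  (forall x y, hinner (phi x) (phi y) = hinner x y) /\
  (forall y, exists x, phi x = y) /\
  (forall x y, phi x = phi y -> x = y).

Definition finite_order {T : Type} (phi : T -> T) : Prop :=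
  exists n : nat, (n >= 1)%nat /\ forall x, Nat.iter n phi x = x.

(* Main.v *)
Require Import Defs.
From Stdlib Require Import Reals.
From Stdlib Require Import Lra Lia ZArith Classical.
Open Scope R_scope.

Section Basics.
Variable k : HilbertLie.
Implicit Types x y z t w : k.

Lemma inner_zero_l y : hinner (@hzero k) y = 0.
Proof.
  pose proof (hinner_addl _ (@hzero k) hzero y) as H.
  rewrite hadd_0 in H. lra.
Qed.

Lemma inner_addr x y z : hinner x (hadd y z) = hinner x y + hinner x z.
Proof. rewrite !(hinner_sym _ x). apply hinner_addl. Qed.

Lemma inner_scalr a x y : hinner x (hscal a y) = a * hinner x y.
Proof. rewrite !(hinner_sym _ x). apply hinner_scall. Qed.

Lemma inner_oppl x y : hinner (hopp x) y = - hinner x y.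
Proof.
  pose proof (hinner_addl _ x (hopp x) y) as H.
  rewrite hadd_opp, inner_zero_l in H. lra.
Qed.

Lemma inner_oppr x y : hinner x (hopp y) = - hinner x y.
Proof. rewrite !(hinner_sym _ x). apply inner_oppl. Qed.

Lemma inner_zero_r y : hinner y (@hzero k) = 0.
Proof. rewrite hinner_sym. apply inner_zero_l. Qed.

Lemma ext x y : (forall t, hinner x t = hinner y t) -> x = y.
Proof.
  intros H.
  assert (E : hadd x (hopp y) = hzero).
  { apply hinner_def. rewrite hinner_addl, inner_oppl, !H. lra. }
  transitivity (hadd (hadd x (hopp y)) y).
  - rewrite <- hadd_assoc, (hadd_comm _ (hopp y)), hadd_opp, hadd_comm, hadd_0. reflexivity.
  - rewrite E, hadd_0. reflexivity.
Qed.

Lemma ext0 x : (forall t, hinner x t = 0) -> x = hzero.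
Proof. intros H. apply ext. intros t. rewrite H, inner_zero_l. reflexivity. Qed.

Lemma inner_br x y z : hinner (hl_br x y) z = hinner x (hl_br y z).
Proof. apply hl_invariant. Qed.

Lemma br_oppl x y : hl_br (hopp x) y = hopp (hl_br x y).
Proof. apply ext; intros t. rewrite inner_br, !inner_oppl, inner_br. reflexivity. Qed.

Lemma br_addr x y z : hl_br x (hadd y z) = hadd (hl_br x y) (hl_br x z).
Proof. apply ext; intros t. rewrite hinner_addl, !inner_br, hl_br_addl, inner_addr. reflexivity. Qed.

Lemma br_anti x y : hl_br x y = hopp (hl_br y x).
Proof.
  apply ext; intros t. rewrite inner_oppl.
  pose proof (hl_br_alt _ (hadd x y)) as H.
  rewrite hl_br_addl, !br_addr, !hl_br_alt in H.
  assert (H2 := f_equal (fun v => hinner v t) H). simpl in H2.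
  rewrite !hinner_addl, !inner_zero_l in H2. lra.
Qed.

Lemma br_scalr a x y : hl_br x (hscal a y) = hscal a (hl_br x y).
Proof.
  apply ext; intros t. rewrite br_anti, hl_br_scall, (br_anti y x).
  rewrite inner_oppl, !hinner_scall, inner_oppl. lra.
Qed.

Lemma br_oppr x y : hl_br x (hopp y) = hopp (hl_br x y).
Proof. rewrite br_anti, br_oppl, <- br_anti. reflexivity. Qed.

Lemma br_zero_l x : hl_br (@hzero k) x = hzero.
Proof. apply ext0; intros t. rewrite inner_br, inner_zero_l. reflexivity. Qed.

Lemma br_zero_r x : hl_br x (@hzero k) = hzero.
Proof. rewrite br_anti, br_zero_l. apply ext0; intros t. rewrite inner_oppl, inner_zero_l. lra. Qed.

Lemma jacD x y w t :
  hinner (hl_br x (hl_br y w)) t = hinner (hl_br (hl_br x y) w) t + hinner (hl_br y (hl_br x w)) t.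
Proof.
  pose proof (hl_jacobi _ x y w) as H.
  assert (H2 := f_equal (fun v => hinner v t) H). simpl in H2.
  rewrite !hinner_addl, inner_zero_l in H2.
  rewrite (br_anti w x), br_oppr, inner_oppl in H2.
  rewrite (br_anti w (hl_br x y)), inner_oppl in H2. lra.
Qed.

Lemma skew x y z : hinner (hl_br x y) z = - hinner y (hl_br x z).
Proof. rewrite br_anti, inner_oppl, inner_br. reflexivity. Qed.

End Basics.

Hint Rewrite hinner_addl inner_addr inner_oppl inner_oppr hinner_scall inner_scalr
  hl_br_addl br_addr br_oppl br_oppr hl_br_scall br_scalr
  inner_zero_l inner_zero_r br_zero_l br_zero_r : lin.
Arguments inner_zero_l {k}. Arguments inner_addr {k}. Arguments inner_scalr {k}.
Arguments inner_oppl {k}. Arguments inner_oppr {k}. Arguments inner_zero_r {k}.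
Arguments ext {k}. Arguments ext0 {k}. Arguments inner_br {k}. Arguments br_oppl {k}.
Arguments br_addr {k}. Arguments br_anti {k}. Arguments br_scalr {k}. Arguments br_oppr {k}.
Arguments br_zero_l {k}. Arguments br_zero_r {k}. Arguments jacD {k}. Arguments skew {k}.

Section Cplx.
Variable k : HilbertLie.
Variable phi : k -> k.
Hypothesis Haut : hl_automorphism k phi.
Hypothesis FPF : forall x : k, phi x = x -> x = hzero.
Variable th : R.

Lemma phi_add x y : phi (hadd x y) = hadd (phi x) (phi y).
Proof. destruct Haut as [H _]. apply H. Qed.
Lemma phi_scal a x : phi (hscal a x) = hscal a (phi x).
Proof. destruct Haut as [_ [H _]]. apply H. Qed.
Lemma phi_br x y : phi (hl_br x y) = hl_br (phi x) (phi y).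
Proof. destruct Haut as [_ [_ [H _]]]. apply H. Qed.
Lemma phi_inner x y : hinner (phi x) (phi y) = hinner x y.
Proof. destruct Haut as [_ [_ [_ [H _]]]]. apply H. Qed.
Lemma phi_opp x : phi (hopp x) = hopp (phi x).
Proof.
  apply ext; intros t. destruct Haut as [_ [_ [_ [_ [Hs _]]]]].
  destruct (Hs t) as [w <-]. rewrite inner_oppl, !phi_inner, inner_oppl. reflexivity.
Qed.
Lemma phi_zero : phi (@hzero k) = hzero.
Proof. apply hinner_def. rewrite phi_inner. apply inner_zero_l. Qed.

Definition c1 (p1 q1 p2 q2 : k) := hadd (hl_br p1 p2) (hopp (hl_br q1 q2)).
Definition c2 (p1 q1 p2 q2 : k) := hadd (hl_br p1 q2) (hl_br q1 p2).

Definition Lmem (a : Z) (p q : k) :=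
  phi p = hadd (hscal (cos (IZR a * th)) p) (hopp (hscal (sin (IZR a * th)) q)) /\
  phi q = hadd (hscal (sin (IZR a * th)) p) (hscal (cos (IZR a * th)) q).

Lemma C1 a b p1 q1 p2 q2 : Lmem a p1 q1 -> Lmem b p2 q2 ->
  Lmem (a + b) (c1 p1 q1 p2 q2) (c2 p1 q1 p2 q2).
Proof.
  intros [H1 H2] [H3 H4]. unfold Lmem, c1, c2.
  rewrite plus_IZR, Rmult_plus_distr_r, cos_plus, sin_plus.
  rewrite !phi_add, !phi_opp, !phi_br, H1, H2, H3, H4.
  split; apply ext; intros t; autorewrite with lin; ring.
Qed.

Lemma C2 a p q : Lmem a p q -> Lmem (- a) p (hopp q).
Proof.
  intros [H1 H2]. unfold Lmem.
  rewrite opp_IZR, Ropp_mult_distr_l_reverse, cos_neg, sin_neg.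
  rewrite phi_opp, H1, H2.
  split; apply ext; intros t; autorewrite with lin; ring.
Qed.

Lemma C3 p q : Lmem 0 p q -> p = hzero /\ q = hzero.
Proof.
  intros [H1 H2]. simpl in H1, H2. rewrite Rmult_0_l, cos_0, sin_0 in H1, H2.
  split; apply FPF.
  - rewrite H1. apply ext; intros t; autorewrite with lin; ring.
  - rewrite H2. apply ext; intros t; autorewrite with lin; ring.
Qed.

Definition Zp (a b : Z) := forall p1 q1 p2 q2, Lmem a p1 q1 -> Lmem b p2 q2 ->
  c1 p1 q1 p2 q2 = hzero /\ c2 p1 q1 p2 q2 = hzero.

Lemma C4 p q r s e f : e = c1 p q r s -> f = c2 p q r s ->
  c1 p (hopp q) e f = hzero -> c2 p (hopp q) e f = hzero -> e = hzero /\ f = hzero.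
Proof.
  intros He Hf H1 H2.
  assert (A : hinner e e = - hinner r (hl_br p e) + hinner s (hl_br q e)).
  { rewrite He at 1. unfold c1. autorewrite with lin. rewrite !skew. ring. }
  assert (B : hinner f f = - hinner s (hl_br p f) - hinner r (hl_br q f)).
  { rewrite Hf at 1. unfold c2. autorewrite with lin. rewrite !skew. ring. }
  assert (E1 := f_equal (hinner r) H1). assert (E2 := f_equal (hinner s) H2).
  unfold c1, c2 in E1, E2. autorewrite with lin in E1, E2.
  pose proof (hinner_pos _ e). pose proof (hinner_pos _ f).
  split; apply hinner_def; lra.
Qed.

Lemma C5 p q r s : hl_br p q = hzero ->
  c1 p (hopp q) (c1 p q r s) (c2 p q r s) = c1 p q (c1 p (hopp q) r s) (c2 p (hopp q) r s) /\
  c2 p (hopp q) (c1 p q r s) (c2 p q r s) = c2 p q (c1 p (hopp q) r s) (c2 p (hopp q) r s).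
Proof.
  intros Hpq. unfold c1, c2.
  split; apply ext; intros t; autorewrite with lin;
  pose proof (jacD p q r t) as J1; pose proof (jacD p q s t) as J2;
  rewrite Hpq, br_zero_l, inner_zero_l in J1, J2; lra.
Qed.

Lemma c1_sym p1 q1 p2 q2 : c1 p2 q2 p1 q1 = hopp (c1 p1 q1 p2 q2).
Proof.
  unfold c1. rewrite (br_anti p2 p1), (br_anti q2 q1).
  apply ext; intros t; autorewrite with lin; ring.
Qed.
Lemma c2_sym p1 q1 p2 q2 : c2 p2 q2 p1 q1 = hopp (c2 p1 q1 p2 q2).
Proof.
  unfold c2. rewrite (br_anti p2 q1), (br_anti q2 p1).
  apply ext; intros t; autorewrite with lin; ring.
Qed.

Lemma opp0 : hopp (@hzero k) = hzero.
Proof. apply ext0; intros t; autorewrite with lin; ring. Qed.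

Lemma Zsym a b : Zp a b -> Zp b a.
Proof.
  intros H p1 q1 p2 q2 H1 H2. destruct (H _ _ _ _ H2 H1) as [E1 E2].
  rewrite c1_sym, c2_sym, E1, E2, opp0. auto.
Qed.

Lemma Zbase a : Zp a 0.
Proof.
  intros p1 q1 p2 q2 _ H2. destruct (C3 _ _ H2) as [-> ->].
  unfold c1, c2. rewrite !br_zero_r, opp0, hadd_0. auto.
Qed.

Lemma Lmem_eq a b p q : a = b -> Lmem a p q -> Lmem b p q.
Proof. intros ->; auto. Qed.

Lemma R1 a c : Zp a c -> Zp a (c + a).
Proof.
  intros H p1 q1 p2 q2 Hu Hv.
  pose proof (C2 _ _ _ Hu) as Hub.
  pose proof (C1 _ _ _ _ _ _ Hub Hv) as Hw.
  apply (Lmem_eq _ c) in Hw; [|ring].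
  destruct (H _ _ _ _ Hu Hw) as [E1 E2].
  pose proof (C1 _ _ _ _ _ _ Hub Hu) as H0.
  apply (Lmem_eq _ 0) in H0; [|ring].
  destruct (C3 _ _ H0) as [_ F].
  assert (Hpq : hl_br p1 q1 = hzero).
  { apply ext0; intros t. assert (G := f_equal (fun v => hinner v t) F).
    simpl in G. unfold c2 in G. rewrite (br_anti (hopp q1) p1) in G.
    autorewrite with lin in G. lra. }
  destruct (C5 p1 q1 p2 q2 Hpq) as [G1 G2].
  apply (C4 p1 q1 p2 q2 _ _ eq_refl eq_refl).
  - rewrite G1. exact E1.
  - rewrite G2. exact E2.
Qed.

Lemma R2 a b : Zp (- a) (a + b) -> Zp a b.
Proof.
  intros H p1 q1 p2 q2 Hu Hv.
  pose proof (C2 _ _ _ Hu) as Hub.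
  pose proof (C1 _ _ _ _ _ _ Hu Hv) as Hw.
  destruct (H _ _ _ _ Hub Hw) as [E1 E2].
  exact (C4 p1 q1 p2 q2 _ _ eq_refl eq_refl E1 E2).
Qed.

Lemma R3 a c : Zp a c -> Zp a (c - a).
Proof.
  intros H.
  assert (H1 : Zp (- a) (a + c)).
  { apply R2. replace (- - a)%Z with a by ring. replace (- a + (a + c))%Z with c by ring. exact H. }
  apply R1 in H1. replace (a + c + - a)%Z with c in H1 by ring.
  apply R2. replace (a + (c - a))%Z with c by ring. exact H1.
Qed.

Lemma Zall_aux (N : nat) : forall a b, (Z.abs a + Z.abs b < Z.of_nat N)%Z -> Zp a b.
Proof.
  induction N as [|N IH]; intros a b Hm; [lia|].
  destruct (Z.eq_dec b 0) as [->|Hb]; [apply Zbase|].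
  destruct (Z.eq_dec a 0) as [->|Ha]; [apply Zsym, Zbase|].
  destruct (Z_le_gt_dec (Z.abs a) (Z.abs b)) as [Hab|Hab].
  - destruct (Z_lt_le_dec 0 (a * b)) as [Hs|Hs].
    + replace b with ((b - a) + a)%Z by ring. apply R1. apply IH. nia.
    + replace b with ((b + a) - a)%Z by ring. apply R3. apply IH. nia.
  - apply Zsym.
    destruct (Z_lt_le_dec 0 (a * b)) as [Hs|Hs].
    + replace a with ((a - b) + b)%Z by ring. apply R1. apply IH. nia.
    + replace a with ((a + b) - b)%Z by ring. apply R3. apply IH. nia.
Qed.

Lemma Zall a b : Zp a b.
Proof. apply (Zall_aux (S (Z.to_nat (Z.abs a + Z.abs b)))). lia. Qed.

End Cplx.

Fixpoint rs (f : nat -> R) (m : nat) : R :=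
  match m with O => 0 | S m => rs f m + f m end.

Lemma rs_ext f g m : (forall j, (j < m)%nat -> f j = g j) -> rs f m = rs g m.
Proof. induction m; simpl; intros H; auto. rewrite IHm, H; auto. Qed.

Lemma rs_plus f g m : rs (fun j => f j + g j) m = rs f m + rs g m.
Proof. induction m; simpl; [ring|rewrite IHm; ring]. Qed.

Lemma rs_scal c f m : rs (fun j => c * f j) m = c * rs f m.
Proof. induction m; simpl; [ring|rewrite IHm; ring]. Qed.

Lemma rs_zero f m : (forall j, (j < m)%nat -> f j = 0) -> rs f m = 0.
Proof. intros H. rewrite (rs_ext f (fun _ => 0)); auto. clear H. induction m; simpl; auto; lra. Qed.

Lemma rs_swap (F : nat -> nat -> R) m1 m2 :
  rs (fun a => rs (fun j => F a j) m2) m1 = rs (fun j => rs (fun a => F a j) m1) m2.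
Proof.
  induction m1; simpl.
  - symmetry. apply rs_zero. auto.
  - rewrite IHm1, <- rs_plus. reflexivity.
Qed.

Lemma rs_comb1 c d f g m : c * rs f m + - (d * rs g m) = rs (fun j => c * f j - d * g j) m.
Proof. induction m; simpl; [ring|rewrite <- IHm; ring]. Qed.

Lemma rs_comb2 c d f g m : c * rs f m + d * rs g m = rs (fun j => c * f j + d * g j) m.
Proof. induction m; simpl; [ring|rewrite <- IHm; ring]. Qed.

Lemma rs_shift h m : rs (fun j => h (S j)) m + h O = rs h m + h m.
Proof. induction m; simpl; [ring|]. lra. Qed.

Lemma rs_per h m : h m = h O -> rs (fun j => h (S j)) m = rs h m.
Proof. intros H. pose proof (rs_shift h m). lra. Qed.

Lemma rs_first g m : (0 < m)%nat -> (forall j, (0 < j < m)%nat -> g j = 0) -> rs g m = g O.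
Proof.
  induction m; intros Hm H; [lia|]. simpl.
  destruct m.
  - simpl. ring.
  - rewrite IHm by (lia || (intros; apply H; lia)). rewrite (H (S m)) by lia. ring.
Qed.

Lemma rs_const m : rs (fun _ => 1) m = INR m.
Proof. induction m; simpl; auto. rewrite IHm. destruct m; simpl; ring. Qed.

Lemma tele x m : 2 * sin (x / 2) * rs (fun a => cos (INR a * x)) m
  = sin (INR m * x - x / 2) + sin (x / 2).
Proof.
  induction m.
  - simpl. replace (0 * x - x / 2) with (- (x/2)) by ring. rewrite sin_neg. ring.
  - cbn [rs]. rewrite Rmult_plus_distr_l, IHm, S_INR.
    replace ((INR m + 1) * x - x / 2) with (INR m * x + x / 2) by field.
    rewrite sin_plus, sin_minus. ring.
Qed.

Lemma trig_sum n j : (0 < j < n)%nat ->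
  rs (fun a => cos (INR a * (2 * PI / INR n) * INR j)) n = 0.
Proof.
  intros Hj.
  assert (Hn : 0 < INR n) by (apply lt_0_INR; lia).
  assert (Hj0 : 0 < INR j) by (apply lt_0_INR; lia).
  assert (Hjn : INR j < INR n) by (apply lt_INR; lia).
  set (x := 2 * PI / INR n * INR j).
  rewrite (rs_ext _ (fun a => cos (INR a * x))) by (intros; unfold x; f_equal; ring).
  pose proof (tele x n) as T.
  assert (E : INR n * x - x / 2 = - (x / 2) + 2 * INR j * PI).
  { unfold x. field. lra. }
  rewrite E, sin_period, sin_neg in T.
  assert (S : 0 < sin (x / 2)).
  { apply sin_gt_0; unfold x.
    - apply Rmult_lt_0_compat; [|lra]. apply Rmult_lt_0_compat; [|auto].
      apply Rdiv_lt_0_compat; [pose proof PI_RGT_0; lra| lra].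
    - apply (Rmult_lt_reg_r (INR n)); auto. field_simplify; [|lra].
      pose proof PI_RGT_0. nra. }
  nra.
Qed.

Section Dec.
Variable k : HilbertLie.
Variable phi : k -> k.
Hypothesis Haut : hl_automorphism k phi.
Variable n : nat.
Hypothesis Hn : (1 <= n)%nat.
Hypothesis Hord : forall x, Nat.iter n phi x = x.

Definition th := 2 * PI / INR n.

Fixpoint vsum (f : nat -> k) (m : nat) : k :=
  match m with O => hzero | S m => hadd (vsum f m) (f m) end.

Lemma inner_vsum f m t : hinner (vsum f m) t = rs (fun j => hinner (f j) t) m.
Proof. induction m; simpl; [apply inner_zero_l|]. rewrite hinner_addl, IHm. reflexivity. Qed.

Lemma phi_vsum f m : phi (vsum f m) = vsum (fun j => phi (f j)) m.
Proof. induction m; simpl; [apply (phi_zero _ _ Haut)|]. rewrite (phi_add _ _ Haut), IHm. reflexivity. Qed.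

Definition Re (a : nat) (x : k) :=
  vsum (fun j => hscal (cos (INR a * th * INR j)) (Nat.iter j phi x)) n.
Definition Im (a : nat) (x : k) :=
  vsum (fun j => hscal (- sin (INR a * th * INR j)) (Nat.iter j phi x)) n.

Lemma aux_period a : INR a * th * INR n = 2 * INR a * PI.
Proof. unfold th. field. apply not_0_INR. lia. Qed.

Lemma eigen a x : Lmem k phi th (Z.of_nat a) (Re a x) (Im a x).
Proof.
  unfold Lmem. rewrite <- INR_IZR_INZ. unfold Re, Im.
  rewrite !phi_vsum.
  split; apply ext; intros t; rewrite inner_vsum; autorewrite with lin; rewrite !inner_vsum.
  - set (h := fun j => cos (INR a * th * (INR j - 1)) * hinner (Nat.iter j phi x) t).
    transitivity (rs (fun j => h (S j)) n).
    { apply rs_ext; intros j _. unfold h. rewrite (phi_scal _ _ Haut), hinner_scall, S_INR.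
      simpl. f_equal. f_equal. ring. }
    rewrite rs_per.
    2:{ unfold h. rewrite Hord. simpl.
        replace (INR a * th * (INR n - 1)) with (- (INR a * th) + 2 * INR a * PI)
          by (rewrite <- aux_period; ring).
        rewrite cos_period. f_equal. f_equal. ring. }
    rewrite ?rs_comb1, ?rs_comb2. apply rs_ext; intros j _. unfold h.
    rewrite !hinner_scall.
    replace (INR a * th * (INR j - 1)) with (INR a * th * INR j - INR a * th) by ring.
    rewrite cos_minus. ring.
  - set (h := fun j => - sin (INR a * th * (INR j - 1)) * hinner (Nat.iter j phi x) t).
    transitivity (rs (fun j => h (S j)) n).
    { apply rs_ext; intros j _. unfold h. rewrite (phi_scal _ _ Haut), hinner_scall, S_INR.
      simpl. f_equal. f_equal. f_equal. ring. }
    rewrite rs_per.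
    2:{ unfold h. rewrite Hord. simpl.
        replace (INR a * th * (INR n - 1)) with (- (INR a * th) + 2 * INR a * PI)
          by (rewrite <- aux_period; ring).
        rewrite sin_period. f_equal. f_equal. f_equal. ring. }
    rewrite ?rs_comb1, ?rs_comb2. apply rs_ext; intros j _. unfold h.
    rewrite !hinner_scall.
    replace (INR a * th * (INR j - 1)) with (INR a * th * INR j - INR a * th) by ring.
    rewrite sin_minus. ring.
Qed.

Lemma decomp x : vsum (fun a => Re a x) n = hscal (INR n) x.
Proof.
  apply ext; intros t. rewrite inner_vsum, hinner_scall.
  unfold Re. rewrite (rs_ext _ (fun a => rs (fun j => cos (INR a * th * INR j) * hinner (Nat.iter j phi x) t) n)).
  2:{ intros a _. rewrite inner_vsum. apply rs_ext; intros j _. apply hinner_scall. }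
  rewrite rs_swap.
  rewrite rs_first by (lia || (intros j Hj;
     rewrite (rs_ext _ (fun a => hinner (Nat.iter j phi x) t * cos (INR a * th * INR j))) by (intros; ring);
     rewrite rs_scal; unfold th; rewrite trig_sum by lia; ring)).
  simpl. rewrite (rs_ext _ (fun _ => 1 * hinner x t)).
  2:{ intros; rewrite Rmult_0_r, cos_0. ring. }
  rewrite (rs_ext _ (fun a => hinner x t * 1)) by (intros; ring).
  rewrite rs_scal, rs_const. ring.
Qed.

Lemma br_vsum_l f m w t : hinner (hl_br (vsum f m) w) t = rs (fun a => hinner (hl_br (f a) w) t) m.
Proof. rewrite inner_br, inner_vsum. apply rs_ext; intros. symmetry. apply inner_br. Qed.

Lemma rs_opp f m : rs (fun j => - f j) m = - rs f m.
Proof. induction m; simpl; [ring|rewrite IHm; ring]. Qed.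

Lemma br_vsum_r f m w t : hinner (hl_br w (vsum f m)) t = rs (fun a => hinner (hl_br w (f a)) t) m.
Proof.
  rewrite (rs_ext _ (fun a => - hinner (f a) (hl_br w t))) by (intros; apply skew).
  rewrite rs_opp, skew, inner_vsum. reflexivity.
Qed.

Hypothesis FPF : forall x : k, phi x = x -> x = hzero.

Lemma brRe a b x y t : hinner (hl_br (Re a x) (Re b y)) t = 0.
Proof.
  pose proof (eigen a x) as Ea. pose proof (eigen b y) as Eb.
  pose proof (C2 _ _ Haut _ _ _ _ Eb) as Ebc.
  destruct (Zall _ _ Haut FPF _ _ _ _ _ _ _ Ea Eb) as [E1 _].
  destruct (Zall _ _ Haut FPF _ _ _ _ _ _ _ Ea Ebc) as [E2 _].
  apply (f_equal (fun v => hinner v t)) in E1, E2. unfold c1 in E1, E2.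
  autorewrite with lin in E1, E2. lra.
Qed.

Lemma all_br (x y : k) : hl_br x y = hzero.
Proof.
  apply ext0; intros t.
  assert (Hn0 : INR n <> 0) by (apply not_0_INR; lia).
  assert (H : hinner (hl_br (hscal (INR n) x) (hscal (INR n) y)) t = 0).
  { rewrite <- !decomp, br_vsum_l. apply rs_zero; intros a _.
    rewrite br_vsum_r. apply rs_zero; intros b _. apply brRe. }
  autorewrite with lin in H.
  apply (Rmult_eq_reg_l (INR n * INR n)); [|apply Rmult_integral_contrapositive_currified; auto]. rewrite Rmult_0_r, Rmult_assoc. exact H.
Qed.

End Dec.


Theorem lemmaD1 (k : HilbertLie) (phi : k -> k) :
  hl_nonzero k -> hl_semisimple k ->
  hl_automorphism k phi -> finite_order phi ->
  exists x : k, x <> hzero /\ phi x = x.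
Proof.
  intros [x0 Hx0] Hss Haut [n [Hn Hord]].
  apply NNPP; intros Hno.
  assert (FPF : forall x : k, phi x = x -> x = hzero).
  { intros x Hx. apply NNPP; intros Hne. apply Hno. exists x. auto. }
  apply Hx0, Hss. intros y.
  exact (all_br k phi Haut n Hn Hord FPF x0 y).
Qed.
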